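(* Let $\Phi:\{0,1\}^n\to\{0,1\}^n$, $\mu\in\{0,1\}^n$ and $\rho\in P_n$. Then: a) $\overline{W}[\Phi^\rho(\mu,\cdot)]=\overline{W}[\omega_\rho(\mu)]$; b) $Or_\rho(\mu)\subset\overline{W}[\Phi^\rho(\mu,\cdot)]$, so $\overline{W}[\Phi^\rho(\mu,\cdot)]\neq\emptyset$; c) $\underline{W}[\Phi^\rho(\mu,\cdot)]\subset\underline{W}[\omega_\rho(\mu)]$; d) $\underline{W}[\Phi^\rho(\mu,\cdot)]\neq\emptyset$ if and only if $\omega_\rho(\mu)$ has exactly one element; thus if $\omega_\rho(\mu)$ has exactly one element, then $\underline{W}[\Phi^\rho(\mu,\cdot)]$ and $\underline{W}[\omega_\rho(\mu)]$ are non-empty; e) if $\omega_\rho(\mu)=\{\mu'\}$ for some $\mu'\in\mathbf{B}^n$, then $\underline{W}[\Phi^\rho(\mu,\cdot)]=\underline{W}[\omega_\rho(\mu)]=\underline{W}(\mu')$.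
   Context: Let $\mathbf{B}=\{0,1\}$ (discrete topology), $n\ge1$, $\Phi:\mathbf{B}^n\to\mathbf{B}^n$. For $\nu\in\mathbf{B}^n$: $\Phi^\nu_i(\mu)=\mu_i$ if $\nu_i=0$, $=\Phi_i(\mu)$ if $\nu_i=1$; $\Phi^{\alpha^0\dots\alpha^k}=\Phi^{\alpha^k}\circ\cdots\circ\Phi^{\alpha^0}$. A sequence $(\alpha^k)_{k\in\mathbf{N}}$ in $\mathbf{B}^n$ is progressive if each $\{k:\alpha^k_i=1\}$ is infinite. $Seq$ = strictly increasing real sequences unbounded above. $P_n$ = functions $\rho:\mathbf{R}\to\mathbf{B}^n$ with $\rho(t_k)=\alpha^k$, $\rho(t)=0$ for $t\notin\{t_k\}$, where $\alpha$ progressive, $(t_k)\in Seq$. Orbit: $\Phi^\rho(\mu,t)=\mu$ for $t<t_0$, $=\Phi^{\alpha^0\dots\alpha^k}(\mu)$ for $t\in[t_k,t_{k+1})$; $Or_\rho(\mu)=\{\Phi^\rho(\mu,t):t\in\mathbf{R}\}$. $\omega_\rho(\mu)=\{\mu':\exists(s_k)\in Seq,\ \Phi^\rho(\mu,s_k)=\mu'$ for all large $k\}$. For a point $\mu'$: $\underline{W}(\mu')=\{\mu'':\forall\rho'\in P_n,\ \omega_{\rho'}(\mu'')\subset\{\mu'\}\}$. Basins of the orbit and of the $\omega$-limit set: $\overline{W}[\Phi^\rho(\mu,\cdot)]=\{\mu':\exists\rho'\in P_n,\exists t'\in\mathbf{R},\forall t\ge t',\ \Phi^{\rho'}(\mu',t)=\Phi^\rho(\mu,t)\}$,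 $\underline{W}[\Phi^\rho(\mu,\cdot)]=\{\mu':\forall\rho'\in P_n,\exists t'\in\mathbf{R},\forall t\ge t',\ \Phi^{\rho'}(\mu',t)=\Phi^\rho(\mu,t)\}$, $\overline{W}[\omega_\rho(\mu)]=\{\mu':\exists\rho'\in P_n,\ \omega_{\rho'}(\mu')=\omega_\rho(\mu)\}$, $\underline{W}[\omega_\rho(\mu)]=\{\mu':\forall\rho'\in P_n,\ \omega_{\rho'}(\mu')=\omega_\rho(\mu)\}$. *)

(* Defs.v *)
From Stdlib Require Import Reals ClassicalEpsilon.
From mathcomp Require Import all_boot.

Set Implicit Arguments.
Unset Strict Implicit.
Unset Printing Implicit Defensive.

Local Open Scope R_scope.

Definition Bn (n : nat) := {ffun 'I_n -> bool}.

Definition phinu (n : nat) (Phi : Bn n -> Bn n) (nu : Bn n) (mu : Bn n) : Bn n :=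
  [ffun i => if nu i then Phi mu i else mu i].

Fixpoint phicomp (n : nat) (Phi : Bn n -> Bn n) (alpha : nat -> Bn n)
    (k : nat) (mu : Bn n) : Bn n :=
  match k with
  | O => phinu Phi (alpha O) mu
  | S k' => phinu Phi (alpha (S k')) (phicomp Phi alpha k' mu)
  end.

Definition progressive (n : nat) (alpha : nat -> Bn n) : Prop :=
  forall (i : 'I_n) (k : nat), exists k', (k <= k')%coq_nat /\ alpha k' i = true.

Definition isSeq (t : nat -> R) : Prop :=
  (forall k k' : nat, (k < k')%coq_nat -> t k < t k') /\
  (forall M : R, exists k, M < t k).

(* rho in P_n, given by the data (alpha, t) *)
Definition inPn (n : nat) (alpha : nat -> Bn n) (t : nat -> R) : Prop :=
  progressive alpha /\ isSeq t.

Definition orbit (n : nat) (Phi : Bn n -> Bn n) (alpha : nat -> Bn n) (t : nat -> R)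
    (mu : Bn n) (s : R) : Bn n :=
  epsilon (inhabits mu)
    (fun x => (s < t O /\ x = mu) \/
              (exists k, t k <= s < t (S k) /\ x = phicomp Phi alpha k mu)).

Definition Or (n : nat) (Phi : Bn n -> Bn n) (alpha : nat -> Bn n) (t : nat -> R)
    (mu : Bn n) (x : Bn n) : Prop :=
  exists s : R, orbit Phi alpha t mu s = x.

Definition omega (n : nat) (Phi : Bn n -> Bn n) (alpha : nat -> Bn n) (t : nat -> R)
    (mu : Bn n) (x : Bn n) : Prop :=
  exists s : nat -> R, isSeq s /\
    exists K : nat, forall k, (K <= k)%coq_nat -> orbit Phi alpha t mu (s k) = x.

Definition Wpt (n : nat) (Phi : Bn n -> Bn n) (mu' : Bn n) (x : Bn n) : Prop :=
  forall alpha' t', inPn alpha' t' ->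
    forall y, omega Phi alpha' t' x y -> y = mu'.

Definition Wbar_orb (n : nat) (Phi : Bn n -> Bn n) (alpha : nat -> Bn n) (t : nat -> R)
    (mu : Bn n) (x : Bn n) : Prop :=
  exists alpha' t', inPn alpha' t' /\
    exists t0 : R, forall s, t0 <= s -> orbit Phi alpha' t' x s = orbit Phi alpha t mu s.

Definition Wund_orb (n : nat) (Phi : Bn n -> Bn n) (alpha : nat -> Bn n) (t : nat -> R)
    (mu : Bn n) (x : Bn n) : Prop :=
  forall alpha' t', inPn alpha' t' ->
    exists t0 : R, forall s, t0 <= s -> orbit Phi alpha' t' x s = orbit Phi alpha t mu s.

Definition Wbar_om (n : nat) (Phi : Bn n -> Bn n) (alpha : nat -> Bn n) (t : nat -> R)
    (mu : Bn n) (x : Bn n) : Prop :=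
  exists alpha' t', inPn alpha' t' /\
    forall y, omega Phi alpha' t' x y <-> omega Phi alpha t mu y.

Definition Wund_om (n : nat) (Phi : Bn n -> Bn n) (alpha : nat -> Bn n) (t : nat -> R)
    (mu : Bn n) (x : Bn n) : Prop :=
  forall alpha' t', inPn alpha' t' ->
    forall y, omega Phi alpha' t' x y <-> omega Phi alpha t mu y.

Definition sub_set (T : Type) (A B : T -> Prop) : Prop := forall x, A x -> B x.
Definition eq_set (T : Type) (A B : T -> Prop) : Prop := forall x, A x <-> B x.
Definition nonempty (T : Type) (A : T -> Prop) : Prop := exists x, A x.
Definition singleton_set (T : Type) (A : T -> Prop) : Prop :=
  exists a, forall x, A x <-> x = a.

(* Main.v *)
Require Import Defs.
From Stdlib Require Import Reals.
From Stdlib Require Import Lra Lia Classical ClassicalEpsilon.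
From mathcomp Require Import all_boot zify.
Notation orbit := Defs.orbit.
Set Implicit Arguments.

Local Open Scope R_scope.

Lemma seq_le (t : nat -> R) : (forall k k', (k<k')%coq_nat -> t k < t k') ->
  forall k k', (k <= k')%coq_nat -> t k <= t k'.
Proof.
intros H k k' Hk. destruct (Nat.eq_dec k k') as [->|Hne]; [lra|].
left; apply H; lia.
Qed.

Lemma succ_inc (t : nat -> R) : (forall k, t k < t (S k)) ->
  forall k k', (k<k')%coq_nat -> t k < t k'.
Proof.
intros H k k'. induction k' as [|k' IH]; intro Hk; [lia|].
destruct (Nat.eq_dec k k') as [->|Hne]; [apply H|].
apply Rlt_trans with (t k'); [apply IH; lia|apply H].
Qed.

Fixpoint iterS (f : R -> R) (k : nat) : R :=
  match k with O => f 0 | S k' => f (iterS f k' + 1) end.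

Lemma char_gen (n : nat) (g : R -> Bn n) (y : Bn n) :
  (exists s : nat -> R, isSeq s /\
    exists K : nat, forall k, (K <= k)%coq_nat -> g (s k) = y) <->
  (forall T, exists s, T <= s /\ g s = y).
Proof.
split.
- intros [s [[Hinc Hunb] [K HK]]] T.
  destruct (Hunb T) as [k0 Hk0].
  exists (s (Nat.max K k0)). split.
  + apply Rlt_le, Rlt_le_trans with (s k0); auto. apply seq_le; auto; lia.
  + apply HK; lia.
- intros H.
  pose f := fun T => proj1_sig (constructive_indefinite_description _ (H T)).
  assert (Hf : forall T, T <= f T /\ g (f T) = y).
  { intro T. exact (proj2_sig (constructive_indefinite_description _ (H T))). }
  exists (iterS f). split; [split|].
  + apply succ_inc. intro k. simpl. destruct (Hf (iterS f k + 1)). lra.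
  + assert (Hk : forall k, INR k <= iterS f k).
    { induction k as [|k IH].
      - simpl. destruct (Hf 0); lra.
      - rewrite S_INR. simpl. destruct (Hf (iterS f k + 1)). lra. }
    intro M. destruct (INR_unbounded M) as [k Hk']. exists k.
    specialize (Hk k). lra.
  + exists O. intros k _. destruct k; simpl; apply Hf.
Qed.

Lemma omega_char n Phi a t x y :
  @omega n Phi a t x y <-> forall T, exists s, T <= s /\ orbit Phi a t x s = y.
Proof. apply char_gen. Qed.

Lemma pigeon (n : nat) (g : R -> Bn n) (P : R -> Prop) :
  (forall T, exists s, T <= s /\ P s) ->
  exists y, forall T, exists s, T <= s /\ P s /\ g s = y.
Proof.
intro H. apply NNPP; intro Hno.
assert (Hall : forall y : Bn n, exists Ty, forall s, Ty <= s -> P s -> g s <> y).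
{ intro y. apply NNPP; intro Hn2. apply Hno. exists y. intro T.
  apply NNPP; intro Hn3. apply Hn2. exists T. intros s Hs HP Hg.
  apply Hn3. exists s. auto. }
assert (Hl : forall l : seq {ffun 'I_n -> bool}, exists T, forall y, y \in l ->
   forall s, T <= s -> P s -> g s <> y).
{ induction l as [|y l IH].
  - exists 0. intros y Hy. by rewrite in_nil in Hy.
  - destruct IH as [T1 H1]. destruct (Hall y) as [T2 H2].
    exists (Rmax T1 T2). intros z Hz s Hs HP.
    rewrite in_cons in Hz. case/orP: Hz => [/eqP ->|Hz].
    + apply H2; auto. apply Rle_trans with (Rmax T1 T2); auto. apply Rmax_r.
    + apply H1; auto. apply Rle_trans with (Rmax T1 T2); auto. apply Rmax_l. }
destruct (Hl (index_enum {ffun 'I_n -> bool})) as [T HT].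
destruct (H T) as [s [Hs HP]].
eapply HT; eauto. exact: (mem_index_enum (g s)).
Qed.

Lemma find_k (t : nat -> R) s : isSeq t -> t 0%nat <= s ->
  exists k, t k <= s < t (S k).
Proof.
intros [Hinc Hunb] H0. destruct (Hunb s) as [N HN].
revert HN. induction N as [|N IH]; intro HN; [lra|].
destruct (Rlt_le_dec s (t N)) as [Hl|Hl]; [apply IH; auto|].
exists N. lra.
Qed.

Lemma orbit_cases n Phi a t (mu : Bn n) s : isSeq t ->
  (s < t 0%nat /\ orbit Phi a t mu s = mu) \/
  (exists k, t k <= s < t (S k) /\ orbit Phi a t mu s = phicomp Phi a k mu).
Proof.
intro Ht. unfold orbit. apply epsilon_spec.
destruct (Rlt_le_dec s (t 0%nat)) as [Hl|Hl].
- exists mu. left. auto.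
- destruct (find_k Ht Hl) as [k Hk]. exists (phicomp Phi a k mu). right. eauto.
Qed.

Lemma orbit_k n Phi a t (mu : Bn n) s k : isSeq t -> t k <= s < t (S k) ->
  orbit Phi a t mu s = phicomp Phi a k mu.
Proof.
intros Ht Hk. pose proof Ht as [Hinc _].
destruct (orbit_cases Phi a mu s Ht) as [[Hs _]|[j [Hj ->]]].
- assert (t 0%nat <= t k) by (apply seq_le; auto; lia). lra.
- destruct (Nat.lt_total j k) as [Hjk|[->|Hjk]]; auto.
  + assert (t (S j) <= t k) by (apply seq_le; auto; lia). lra.
  + assert (t (S k) <= t j) by (apply seq_le; auto; lia). lra.
Qed.

Lemma phicomp_ext n Phi (a b : nat -> Bn n) k x :
  (forall j, (j <= k)%coq_nat -> a j = b j) -> phicomp Phi a k x = phicomp Phi b k x.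
Proof.
induction k as [|k IH]; intro H; simpl.
- rewrite (H 0%nat (le_n _)); auto.
- rewrite (H (S k) (le_n _)). f_equal. apply IH. intros j Hj; apply H; lia.
Qed.

Lemma reach n Phi a t (x y : Bn n) : isSeq t -> omega Phi a t x y ->
  exists k, phicomp Phi a k x = y.
Proof.
intros Ht Hom. rewrite omega_char in Hom.
destruct (Hom (t 0%nat)) as [s [Hs Hy]].
destruct (find_k Ht Hs) as [k Hk]. exists k. rewrite <- Hy.
symmetry. apply orbit_k; auto.
Qed.

Lemma tail_omega n Phi a t a' t' (x x' : Bn n) T :
  (forall s, T <= s -> orbit Phi a t x s = orbit Phi a' t' x' s) ->
  forall y, omega Phi a t x y <-> omega Phi a' t' x' y.
Proof.
intros H y. rewrite !omega_char. split; intros Hy T0;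
  destruct (Hy (Rmax T T0)) as [s [Hs Hg]]; exists s;
  (split; [apply Rle_trans with (Rmax T T0); auto; apply Rmax_r|]);
  [rewrite <- H|rewrite H]; auto; apply Rle_trans with (Rmax T T0); auto; apply Rmax_l.
Qed.

Lemma omega_nonempty n Phi a t (x : Bn n) : exists y, omega Phi a t x y.
Proof.
destruct (@pigeon n (orbit Phi a t x) (fun _ => True)) as [y Hy].
- intro T. exists T. split; [lra|auto].
- exists y. rewrite omega_char. intro T. destruct (Hy T) as [s [? [_ ?]]]. eauto.
Qed.

Lemma omega_event n Phi a t (x c : Bn n) :
  (forall y, omega Phi a t x y -> y = c) ->
  exists T, forall s, T <= s -> orbit Phi a t x s = c.
Proof.
intro H. apply NNPP; intro Hno.
destruct (@pigeon n (orbit Phi a t x) (fun s => orbit Phi a t x s <> c)) as [y Hy].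
- intro T. apply NNPP; intro H2. apply Hno. exists T. intros s Hs.
  apply NNPP; intro H3. apply H2. eauto.
- assert (Hyc : y = c).
  { apply H. rewrite omega_char. intro T. destruct (Hy T) as [s [? [_ ?]]]. eauto. }
  destruct (Hy 0) as [s [_ [Hn Hg]]]. congruence.
Qed.

Lemma const_omega n Phi a t (x c : Bn n) T :
  (forall s, T <= s -> orbit Phi a t x s = c) ->
  forall y, omega Phi a t x y <-> y = c.
Proof.
intros H y. rewrite omega_char. split.
- intro Hy. destruct (Hy T) as [s [Hs <-]]. auto.
- intros -> T0. exists (Rmax T T0). split; [apply Rmax_r|]. apply H, Rmax_l.
Qed.

Lemma splice n Phi a t (mu x : Bn n) (b : nat -> Bn n) k' m :
  inPn a t -> phicomp Phi b k' x = phicomp Phi a m mu ->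
  Wbar_orb Phi a t mu x.
Proof.
intros [Hprog Ht] Hy. pose proof Ht as [Hinc Hunb].
pose a2 := fun j : nat => if (j <= k')%N then b j else a (j - k' + m)%N.
pose t2 := fun j : nat => if (j <= k')%N then t (S m) - INR (S k' - j) else t (j - k' + m)%N.
assert (H1 : forall d, phicomp Phi a2 (k' + d) x = phicomp Phi a (m + d) mu).
{ induction d as [|d IH].
  - rewrite !addn0 -Hy. apply phicomp_ext. intros j Hj. rewrite /a2.
    case: ifP => Hj2; [reflexivity|lia].
  - rewrite !addnS. simpl. rewrite IH. f_equal. rewrite /a2.
    case: ifP => Hj2; [lia|]. f_equal. lia. }
assert (Hsucc : forall j, t2 j < t2 (S j)).
{ intro j. rewrite /t2. case: ifP => Hj; case: ifP => Hj2.
  - have := lt_INR (S k' - S j) (S k' - j) ltac:(lia). lra.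
  - have -> : (S j - k' + m)%N = S m by lia.
    have -> : (S k' - j)%N = 1%N by lia. simpl. lra.
  - lia.
  - have -> : (S j - k' + m)%N = S (j - k' + m) by lia. apply Hinc. lia. }
assert (Ht2 : isSeq t2).
{ split; [apply succ_inc; auto|].
  intro M. destruct (Hunb M) as [K HK]. exists (K + k' + 1)%N.
  rewrite /t2. case: ifP => Hj; [lia|].
  apply Rlt_le_trans with (t K); auto. apply seq_le; auto. lia. }
assert (HtS : t2 (S k') = t (S m)).
{ rewrite /t2. case: ifP => Hj; [lia|]. f_equal. lia. }
exists a2, t2. split; [split; auto|].
{ intros i k. destruct (Hprog i (k + m + 1)%N) as [k0 [Hk0 Ha]].
  exists (k0 - m + k')%N. split; [lia|]. rewrite /a2. case: ifP => Hj; [lia|].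
  have -> : (k0 - m + k' - k' + m)%N = k0 by lia. exact Ha. }
exists (t (S m)). intros s Hs.
destruct (orbit_cases Phi a2 x s Ht2) as [[Hs0 _]|[j [Hj ->]]].
- have := Hsucc 0%nat. have := @succ_inc t2 Hsucc 0%nat (S k') ltac:(lia). lra.
- destruct (Compare_dec.le_lt_dec j k') as [Hjk|Hjk].
  + assert (t2 (S j) <= t2 (S k')) by (apply seq_le; [apply succ_inc; auto|lia]). lra.
  + have E := H1 (j - k')%N.
    rewrite (_ : (k' + (j - k'))%N = j) in E; [|lia].
    rewrite (_ : (m + (j - k'))%N = (j - k' + m)%N) in E; [|lia].
    rewrite E. symmetry. apply orbit_k; auto.
    have Ej : t2 j = t (j - k' + m)%N by rewrite /t2; case: ifP => ?; [lia|].
    have Ej2 : t2 (S j) = t (S (j - k' + m)).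
    { rewrite /t2; case: ifP => ?; [lia|]. f_equal. lia. }
    lra.
Qed.

Lemma fixed_orbit n Phi a t (c : Bn n) s : isSeq t -> Phi c = c ->
  orbit Phi a t c s = c.
Proof.
intros Ht Hc.
assert (Hnu : forall nu, phinu Phi nu c = c).
{ intro nu. apply/ffunP => i. rewrite ffunE. case: (nu i) => //. by rewrite Hc. }
assert (Hk : forall k, phicomp Phi a k c = c).
{ induction k as [|k IH]; simpl; [apply Hnu|rewrite IH; apply Hnu]. }
destruct (orbit_cases Phi a c s Ht) as [[_ ->]|[k [_ ->]]]; auto.
Qed.

Lemma part_c n Phi a t (mu : Bn n) :
  sub_set (Wund_orb Phi a t mu) (Wund_om Phi a t mu).
Proof.
intros x Hx a' t' Hp. destruct (Hx a' t' Hp) as [T HT]. eapply tail_omega; exact HT.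
Qed.

Lemma part_a n Phi a t (mu : Bn n) : inPn a t ->
  eq_set (Wbar_orb Phi a t mu) (Wbar_om Phi a t mu).
Proof.
intros Hp x. split.
- intros [a' [t' [Hp' [T HT]]]]. exists a', t'. split; auto. eapply tail_omega; exact HT.
- intros [a' [t' [[Hp' Ht'] Heq]]].
  destruct (omega_nonempty Phi a t mu) as [y Hy].
  apply Heq in Hy as Hy'.
  destruct (reach Ht' Hy') as [k' Hk'].
  destruct (reach (proj2 Hp) Hy) as [m Hm].
  apply (@splice n Phi a t mu x a' k' m); auto. congruence.
Qed.

Lemma part_b n Phi a t (mu : Bn n) : inPn a t ->
  sub_set (Or Phi a t mu) (Wbar_orb Phi a t mu) /\ nonempty (Wbar_orb Phi a t mu).
Proof.
intros Hp. split.
- intros x [s0 Hs0]. subst x.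
  destruct (orbit_cases Phi a mu s0 (proj2 Hp)) as [[_ E]|[k [_ E]]]; rewrite E.
  + apply (@splice n Phi a t mu mu a 0%nat 0%nat); auto.
  + apply (@splice n Phi a t mu _ (fun _ => a (S k)) 0%nat (S k)); auto.
- exists mu. exists a, t. split; auto. exists 0. auto.
Qed.

Lemma d_to n Phi a t (mu x : Bn n) : inPn a t -> Wund_orb Phi a t mu x ->
  singleton_set (omega Phi a t mu).
Proof.
intros Hp Hx. pose proof Hp as [Hprog Ht]. pose proof Ht as [Hinc Hunb].
destruct (Hx a t Hp) as [T1 HT1].
pose tS := fun k => t (S k).
assert (HpS : inPn a tS).
{ split; auto. split.
  - intros k k' Hk. apply Hinc. lia.
  - intro M. destruct (Hunb M) as [K HK]. exists K. unfold tS.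
    have := Hinc K (S K) ltac:(lia). lra. }
destruct (Hx a tS HpS) as [T2 HT2].
destruct (Hunb (Rmax T1 T2)) as [J HJ].
assert (Hc : forall j, (J <= j)%coq_nat -> phicomp Phi a (S j) x = phicomp Phi a j x).
{ intros j Hj.
  have Hle : t J <= t (S j) by (apply seq_le; auto; lia).
  have := Rmax_l T1 T2. have := Rmax_r T1 T2. intros H2 H1'.
  rewrite -(@orbit_k n Phi a t x (t (S j)) (S j)); [|auto|split; [lra|apply Hinc; lia]].
  rewrite -(@orbit_k n Phi a tS x (t (S j)) j); [|apply HpS|unfold tS; split; [lra|apply Hinc; lia]].
  rewrite HT1; [|lra]. rewrite HT2; [|lra]. reflexivity. }
assert (Hc2 : forall d, phicomp Phi a (J + d) x = phicomp Phi a J x).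
{ induction d as [|d IH]; [by rewrite addn0|]. rewrite addnS Hc; [exact IH|lia]. }
exists (phicomp Phi a J x). intro y. apply (@const_omega _ _ _ _ _ _ (Rmax T1 (t J))).
intros s Hs. have := Rmax_l T1 (t J). have := Rmax_r T1 (t J). intros H2 H1'.
rewrite -HT1; [|lra].
destruct (orbit_cases Phi a x s Ht) as [[Hs0 _]|[k [Hk ->]]].
- have : t 0%nat <= t J by (apply seq_le; auto; lia). lra.
- destruct (Compare_dec.le_lt_dec J k) as [HJk|HJk].
  + rewrite (_ : k = (J + (k - J))%N); [apply Hc2|lia].
  + have : t (S k) <= t J by (apply seq_le; auto; lia). lra.
Qed.

Lemma d_from n Phi a t (mu : Bn n) : inPn a t ->
  singleton_set (omega Phi a t mu) -> exists c, Wund_orb Phi a t mu c.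
Proof.
intros Hp [c Hc]. pose proof Hp as [Hprog Ht]. pose proof Ht as [Hinc Hunb].
destruct (@omega_event n Phi a t mu c) as [T HT].
{ intros y Hy. by apply Hc. }
assert (Hfix : Phi c = c).
{ apply/ffunP => i. destruct (Hunb T) as [K HK].
  destruct (Hprog i (S K)) as [k0 [Hk0 Ha]].
  destruct k0 as [|k1]; [lia|].
  have E1 : phicomp Phi a (S k1) mu = c.
  { rewrite -(HT (t (S k1))).
    - symmetry. apply orbit_k; auto. split; [lra|apply Hinc; lia].
    - have : t K <= t (S k1) by (apply seq_le; auto; lia). lra. }
  have E0 : phicomp Phi a k1 mu = c.
  { rewrite -(HT (t k1)).
    - symmetry. apply orbit_k; auto. split; [lra|apply Hinc; lia].
    - have : t K <= t k1 by (apply seq_le; auto; lia). lra. }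
  move: E1. rewrite /= E0 => E1.
  have := congr1 (fun f : Bn n => f i) E1. rewrite /= /phinu ffunE Ha. auto. }
exists c. intros a' t' [_ Ht']. exists T. intros s Hs.
rewrite fixed_orbit; auto. symmetry; auto.
Qed.

Lemma part_e n Phi a t (mu mu' : Bn n) :
  eq_set (omega Phi a t mu) (fun x => x = mu') ->
  eq_set (Wund_orb Phi a t mu) (Wund_om Phi a t mu) /\
  eq_set (Wund_om Phi a t mu) (Wpt Phi mu').
Proof.
intros H. split.
- intro x. split; [apply part_c|]. intros Hx a' t' Hp.
  destruct (@omega_event n Phi a' t' x mu') as [T1 HT1].
  { intros y Hy. apply H. apply (Hx a' t' Hp). auto. }
  destruct (@omega_event n Phi a t mu mu') as [T2 HT2].
  { intros y Hy. by apply H. }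
  exists (Rmax T1 T2). intros s Hs.
  have := Rmax_l T1 T2. have := Rmax_r T1 T2. intros.
  rewrite HT1; [|lra]. rewrite HT2; [|lra]. reflexivity.
- intro x. split.
  + intros Hx a' t' Hp y Hy. apply H. apply (Hx a' t' Hp). auto.
  + intros Hx a' t' Hp y. rewrite H. split.
    * intro Hy. exact (Hx a' t' Hp y Hy).
    * intros ->. destruct (omega_nonempty Phi a' t' x) as [z Hz].
      rewrite -(Hx _ _ Hp z Hz). auto.
Qed.

Unset Implicit Arguments.

Theorem theorem51 (n : nat) (Hn : (1 <= n)%coq_nat)
  (Phi : Bn n -> Bn n) (mu : Bn n) (alpha : nat -> Bn n) (t : nat -> R)
  (Hrho : inPn alpha t) :
  (* a *) eq_set (Wbar_orb Phi alpha t mu) (Wbar_om Phi alpha t mu) /\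
  (* b *) (sub_set (Or Phi alpha t mu) (Wbar_orb Phi alpha t mu) /\
           nonempty (Wbar_orb Phi alpha t mu)) /\
  (* c *) sub_set (Wund_orb Phi alpha t mu) (Wund_om Phi alpha t mu) /\
  (* d *) ((nonempty (Wund_orb Phi alpha t mu) <-> singleton_set (omega Phi alpha t mu)) /\
           (singleton_set (omega Phi alpha t mu) ->
              nonempty (Wund_orb Phi alpha t mu) /\ nonempty (Wund_om Phi alpha t mu))) /\
  (* e *) (forall mu' : Bn n,
             eq_set (omega Phi alpha t mu) (fun x => x = mu') ->
             eq_set (Wund_orb Phi alpha t mu) (Wund_om Phi alpha t mu) /\
             eq_set (Wund_om Phi alpha t mu) (Wpt Phi mu')).
Proof.
split; [apply part_a; auto|].
split; [apply part_b; auto|].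
split; [apply part_c|].
split; [|intros mu'; apply part_e].
split.
- split.
  + intros [x Hx]. exact (d_to Hrho Hx).
  + intro H. exact (d_from Hrho H).
- intro H. destruct (d_from Hrho H) as [c Hc]. split; exists c; auto. apply part_c; auto.
Qed.
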